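(* Let $m\ge1$, $q=2^m$, let $n$ be odd, and let $L$ be a $2$-linear polynomial over $\mathbb F_{q^n}$. Then $\mathrm{Tr}(x^{q+1})+L(x)$ is a permutation polynomial of $\mathbb F_{q^n}$ if and only if $L^\prime(\ker\mathrm{Tr})=\ker\mathrm{Tr}$ and the map $x\mapsto L^\prime(x)+x^{1/2}$ induces an automorphism of the additive quotient group $\mathbb F_{q^n}/\ker\mathrm{Tr}$ (via $\ker\mathrm{Tr}+\alpha\mapsto\ker\mathrm{Tr}+L'(\alpha)+\alpha^{1/2}$).
   Context: $\mathrm{Tr}$ denotes the trace map of $\mathbb F_{q^n}$ over $\mathbb F_q$. A $2$-linear polynomial over $\mathbb F_{q^n}$ has the form $\sum_{j=0}^{mn-1}a_jx^{2^j}$, $a_j\in\mathbb F_{q^n}$; its adjoint is $L^\prime(x)=\sum_j(a_jx)^{2^{-j}}$, where $y\mapsto y^{2^{-j}}$ is the inverse of $y\mapsto y^{2^j}$ on $\mathbb F_{q^n}$; $x^{1/2}$ denotes the inverse of the automorphism $x\mapsto x^2$ of $\mathbb F_{q^n}$. Polynomials are regarded as maps on $\mathbb F_{q^n}$. *)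

(* Defs.v *)
From mathcomp Require Import all_boot all_order all_algebra all_field.
Set Implicit Arguments. Unset Strict Implicit. Unset Printing Implicit Defensive.
Import GRing.Theory.
Local Open Scope ring_scope.

(* F plays the role of F_{q^n}, q = 2^m, with #|F| = 2^(m*n). *)

Definition Tr (F : finFieldType) (m n : nat) (x : F) : F :=
  \sum_(i < n) x ^+ ((2 ^ m) ^ i).

(* y |-> y^(2^{-j}): inverse of y |-> y^(2^j) on a field with 2^N elements
   (for j < N it is y |-> y^(2^(N-j)), since y^(2^N) = y). *)
Definition frobinv (F : finFieldType) (N j : nat) (y : F) : F :=
  y ^+ (2 ^ (N - j)).

Definition lin2 (F : finFieldType) (N : nat) (a : nat -> F) (x : F) : F :=
  \sum_(j < N) a j * x ^+ (2 ^ j).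

Definition adj2 (F : finFieldType) (N : nat) (a : nat -> F) (x : F) : F :=
  \sum_(j < N) frobinv N j (a j * x).

Definition sqrtF (F : finFieldType) (N : nat) (x : F) : F := frobinv N 1 x.

(* Main.v *)
Require Import Defs.
From mathcomp Require Import all_boot all_order all_algebra all_field.
From mathcomp Require Import ring.
Import GRing.Theory.
Local Open Scope ring_scope.

Section Main.
Variables (F : finFieldType) (m n : nat) (a : nat -> F).
Hypotheses (m0 : (0 < m)%N) (nodd : odd n) (cardF : #|F| = (2 ^ (m * n))%N).

Local Notation N := (m * n)%N.
Local Notation q := (2 ^ m)%N.

Lemma N0 : (0 < N)%N.
Proof. by rewrite muln_gt0 m0; case: n nodd. Qed.

Lemma q2 : (2 <= q)%N.
Proof. by rewrite -{1}(expn1 2) leq_exp2l. Qed.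

Lemma char2 : (2%N \in [pchar F]).
Proof. by apply: (card_finPcharP cardF). Qed.

Lemma opp2 (x : F) : - x = x. Proof. exact: oppr_pchar2 char2 x. Qed.
Lemma add2 (x : F) : x + x = 0. Proof. exact: addrr_pchar2 char2 x. Qed.
Lemma sub2 (x y : F) : x - y = x + y. Proof. by rewrite opp2. Qed.

Lemma frobD k (x y : F) : (x + y) ^+ (2 ^ k) = x ^+ (2 ^ k) + y ^+ (2 ^ k).
Proof.
elim: k => [|k IH]; first by rewrite !expr1.
by rewrite expnSr !exprM IH sqrrD (mulrn_pchar char2) addr0.
Qed.

Lemma frob_sum k (I : finType) (P : pred I) (g : I -> F) :
  (\sum_(i | P i) g i) ^+ (2 ^ k) = \sum_(i | P i) g i ^+ (2 ^ k).
Proof.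
apply: (big_morph (fun x : F => x ^+ (2 ^ k)) (frobD k)).
by rewrite expr0n expn_eq0.
Qed.

Lemma xN (x : F) : x ^+ (2 ^ N) = x.
Proof. by rewrite -cardF expf_card. Qed.

Lemma xqn (x : F) : x ^+ (q ^ n) = x.
Proof. by rewrite -expnM xN. Qed.

Lemma rot_sum k (g : nat -> F) : g k = g 0%N ->
  \sum_(i < k) g i.+1 = \sum_(i < k) g i.
Proof.
case: k => [|k] e; first by rewrite !big_ord0.
by rewrite big_ord_recr big_ord_recl /= e addrC.
Qed.

Definition T (x : F) := \sum_(i < N) x ^+ (2 ^ i).

Lemma T_add x y : T (x + y) = T x + T y.
Proof. by rewrite /T -big_split /=; apply: eq_bigr => i _; rewrite frobD. Qed.

Lemma T0 : T 0 = 0.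
Proof. by rewrite /T big1 // => i _; rewrite expr0n expn_eq0. Qed.

Lemma T_sq x : T (x ^+ 2) = T x.
Proof.
rewrite /T; under eq_bigr do rewrite -exprM -expnS.
by rewrite (rot_sum _ (fun i => x ^+ (2 ^ i))) // xN expr1.
Qed.

Lemma T_frob k x : T (x ^+ (2 ^ k)) = T x.
Proof. by elim: k => [|k IH]; rewrite ?expr1 // expnSr exprM T_sq. Qed.

Lemma Tr_add (x y : F) : Tr m n (x + y) = Tr m n x + Tr m n y.
Proof. by rewrite /Tr -big_split /=; apply: eq_bigr => i _; rewrite -expnM frobD. Qed.

Lemma Tr0 : Tr m n (0:F) = 0.
Proof. by rewrite /Tr big1 // => i _; rewrite expr0n expn_eq0 expn_eq0. Qed.

Lemma Tr_q (x : F) : Tr m n (x ^+ q) = Tr m n x.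
Proof.
rewrite /Tr; under eq_bigr do rewrite -exprM -expnS.
by rewrite (rot_sum _ (fun i => x ^+ (q ^ i))) // xqn expr1.
Qed.

Lemma Tr_in (x : F) : (Tr m n x) ^+ q = Tr m n x.
Proof.
rewrite /Tr frob_sum; under eq_bigr do rewrite -exprM -expnSr.
by rewrite (rot_sum _ (fun i => x ^+ (q ^ i))) // xqn expr1.
Qed.

Lemma size_sumX (e : nat -> nat) (inc : forall i, (e i < e i.+1)%N) k :
  size (\sum_(i < k.+1) 'X^(e i) : {poly F}) = (e k).+1.
Proof.
elim: k => [|k IH]; first by rewrite big_ord1 size_polyXn.
rewrite big_ord_recr /= addrC size_addl ?size_polyXn // IH ltnS; exact: inc.
Qed.

Lemma card_roots (p : {poly F}) : p != 0 -> (#|[set x | root p x]| < size p)%N.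
Proof.
move=> p0; rewrite cardE; apply: max_poly_roots => //; last exact: enum_uniq.
by apply/allP => x; rewrite mem_enum inE.
Qed.

Lemma T_nz : exists x, T x != 0.
Proof.
case: (boolP [forall x, T x == 0]) => [/forallP H|]; last first.
  by rewrite negb_forall => /existsP [x Hx]; exists x.
exfalso.
move: N0 (N0); case E: N => [|N'] // _ _.
pose p : {poly F} := \sum_(i < N'.+1) 'X^(2 ^ i).
have sp : size p = (2 ^ N').+1 by apply: size_sumX => i; rewrite ltn_exp2l.
have p0 : p != 0 by rewrite -size_poly_eq0 sp.
have := card_roots _ p0; rewrite sp ltnS.
have -> : [set x | root p x] = setT.
  apply/setP => x; rewrite !inE /root /p horner_sum.
  under eq_bigr do rewrite hornerXn.
  by have := H x; rewrite /T E.
by rewrite cardsT cardF E expnS leqNgt ltn_Pmull // expn_gt0.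
Qed.

Lemma T_nondeg w : (forall z, T (z * w) = 0) -> w = 0.
Proof.
move=> H; apply/eqP; apply: contraT => w0; case: T_nz => x.
by rewrite -(divfK w0 x) H eqxx.
Qed.

Definition Fq := [set c : F | c ^+ q == c].
Definition K := [set x : F | Tr m n x == 0].

Lemma Fq_mul c d : c \in Fq -> d \in Fq -> c * d \in Fq.
Proof. by rewrite !inE exprMn => /eqP -> /eqP ->. Qed.
Lemma Fq_inv c : c \in Fq -> c^-1 \in Fq.
Proof. by rewrite !inE exprVn => /eqP ->. Qed.
Lemma Fq_add c d : c \in Fq -> d \in Fq -> c + d \in Fq.
Proof. by rewrite !inE frobD => /eqP -> /eqP ->. Qed.
Lemma Fq_sq c : c \in Fq -> c ^+ 2 \in Fq.
Proof. by rewrite !inE exprAC => /eqP ->. Qed.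
Lemma Fq0 : (0 : F) \in Fq.
Proof. by rewrite inE expr0n expn_eq0. Qed.
Lemma Tr_Fq' x : Tr m n x \in Fq.
Proof. by rewrite inE Tr_in. Qed.

Lemma Fq_iter c i : c \in Fq -> c ^+ (q ^ i) = c.
Proof.
rewrite inE => /eqP e; elim: i => [|i IH]; first by rewrite expr1.
by rewrite expnSr exprM IH e.
Qed.

Lemma oddn_mul (x : F) : x *+ n = x.
Proof.
rewrite -(odd_double_half n) nodd mulrnDr -muln2 mulnC mulrnA.
by rewrite (mulrn_pchar char2) mul0rn addr0.
Qed.

Lemma Tr_Fq c : c \in Fq -> Tr m n c = c.
Proof.
move=> cF; rewrite /Tr; under eq_bigr do rewrite Fq_iter //.
by rewrite sumr_const card_ord oddn_mul.
Qed.

Lemma Tr_scal c x : c \in Fq -> Tr m n (c * x) = c * Tr m n x.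
Proof.
move=> cF; rewrite /Tr mulr_sumr; apply: eq_bigr => i _.
by rewrite exprMn Fq_iter.
Qed.

Lemma T_sum (I : finType) (P : pred I) (g : I -> F) :
  T (\sum_(i | P i) g i) = \sum_(i | P i) T (g i).
Proof. exact: (big_morph T T_add T0). Qed.

Lemma T_Tr x : T (Tr m n x) = T x.
Proof.
rewrite /Tr T_sum; under eq_bigr do rewrite -expnM T_frob.
by rewrite sumr_const card_ord oddn_mul.
Qed.

Lemma K_perp c k : c \in Fq -> k \in K -> T (c * k) = 0.
Proof.
move=> cF; rewrite inE => /eqP kK.
by rewrite -T_Tr Tr_scal // kK mulr0 T0.
Qed.

Lemma D1 y : (forall c, c \in Fq -> T (c * y) = 0) -> y \in K.
Proof.
move=> H; rewrite inE; apply: contraT => t0.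
case: T_nz => x /eqP Tx; exfalso; apply: Tx.
pose c := Tr m n x / Tr m n y.
have cF : c \in Fq by apply: Fq_mul; rewrite ?Fq_inv ?Tr_Fq'.
by rewrite -T_Tr -(divfK t0 (Tr m n x)) -/c -Tr_scal // T_Tr; apply: H.
Qed.

Lemma D2 y : (forall k, k \in K -> T (k * y) = 0) -> y \in Fq.
Proof.
move=> H; case En: n nodd => [|n'] // _.
have e : y ^+ (q ^ n') = y.
  apply/eqP; rewrite -subr_eq0; apply/eqP; apply: T_nondeg => z.
  have kK : z ^+ q + z \in K by rewrite inE Tr_add Tr_q add2.
  have := H _ kK; rewrite mulrDl T_add.
  rewrite -(T_frob (m * n') (z ^+ q * y)) expnM exprMn -exprM -expnS -En xqn.
  by rewrite sub2 mulrDr T_add.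
by rewrite inE -{1}e -exprM -expnSr -En xqn.
Qed.

Lemma card_Fq : (#|Fq| <= q)%N.
Proof.
pose p : {poly F} := 'X^q - 'X.
have sp : size p = q.+1.
  by rewrite /p size_addl ?size_polyXn // size_opp size_polyX ltnS q2.
have p0 : p != 0 by rewrite -size_poly_eq0 sp.
have := card_roots _ p0; rewrite sp ltnS.
suff -> : Fq = [set x | root p x] by [].
apply/setP => x; rewrite !inE /root /p !hornerE subr_eq0.
by [].
Qed.

Lemma card_K : (#|K| <= q ^ n.-1)%N.
Proof.
case En: n nodd => [|n'] // _.
pose p : {poly F} := \sum_(i < n'.+1) 'X^(q ^ i).
have sp : size p = (q ^ n').+1 by apply: size_sumX => i; rewrite ltn_exp2l // q2.
have p0 : p != 0 by rewrite -size_poly_eq0 sp.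
have := card_roots _ p0; rewrite sp ltnS /=.
suff -> : K = [set x | root p x] by [].
apply/setP => x; rewrite !inE /root /p horner_sum /Tr En.
by under [in RHS]eq_bigr do rewrite hornerXn.
Qed.

Section Additive.
Variable g : F -> F.
Hypothesis gD : forall x y, g (x + y) = g x + g y.

Lemma g0 : g 0 = 0.
Proof. by have := gD 0 0; rewrite addr0 => /eqP; rewrite -subr_eq0 sub2 addrA add2 add0r => /eqP. Qed.

Definition kerg := [set x | g x == 0].
Definition img := [set g x | x : F].

Lemma GL1 : (#|F| <= #|img| * #|kerg|)%N.
Proof.
pose s y := odflt 0 [pick z | g z == y].
have gs x : g (s (g x)) = g x.
  rewrite /s; case: pickP => [z /eqP //|/(_ x)]; by rewrite eqxx.
pose h x := (g x, x + s (g x)).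
have hI : injective h.
  move=> x y [] e1; rewrite e1; exact: addIr.
rewrite -cardsX -cardsT -(card_imset _ hI); apply: subset_leq_card.
apply/subsetP => _ /imsetP [x _ ->]; rewrite !inE /=.
by rewrite gD gs add2 eqxx andbT; apply/imsetP; exists x.
Qed.

Lemma g_inj_ker x y : (forall z, g z = 0 -> z = 0) -> g x = g y -> x = y.
Proof.
move=> H e; apply/eqP; rewrite -subr_eq0 sub2; apply/eqP; apply: H.
by rewrite gD e add2.
Qed.

Lemma im_big : (forall x, g x \in Fq) -> (#|kerg| <= q ^ n.-1)%N ->
  forall c, c \in Fq -> exists x, g x = c.
Proof.
move=> gF kb.
have qi : (q <= #|img|)%N.
  have := GL1; rewrite cardF expnM.
  case En: n nodd => [|n'] // _ H; move: kb; rewrite En /= => kb.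
  rewrite -(@leq_pmul2r (q ^ n')) ?expn_gt0 // -expnS (leq_trans H) //.
  by rewrite leq_mul2l kb orbT.
have e : img = Fq.
  apply/eqP; rewrite eqEcard (leq_trans card_Fq qi) andbT.
  by apply/subsetP => _ /imsetP [x _ ->].
by move=> c; rewrite -e => /imsetP [x _ ->]; exists x.
Qed.

Lemma ker_big : (forall x, g x \in K) -> (q <= #|kerg|)%N.
Proof.
move=> gK.
have ib : (#|img| <= q ^ n.-1)%N.
  apply: leq_trans card_K; apply: subset_leq_card.
  by apply/subsetP => _ /imsetP [x _ ->].
have := GL1; rewrite cardF expnM.
case En: n nodd => [|n'] // _ H; move: ib; rewrite En /= => ib.
rewrite -(@leq_pmul2l (q ^ n')) ?expn_gt0 // -expnSr (leq_trans H) //.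
by rewrite leq_mul2r ib orbT.
Qed.
End Additive.


Definition L := lin2 N a.
Definition Lp := adj2 N a.
Definition phi (x : F) := Lp x + sqrtF N x.
Definition M (x : F) := L x + x ^+ 2.
Definition f := fun x : F => Tr m n (x ^+ (2 ^ m).+1) + lin2 (m * n) a x.

Lemma L_add x y : L (x + y) = L x + L y.
Proof. by rewrite /L /lin2 -big_split; apply: eq_bigr => i _; rewrite frobD mulrDr. Qed.
Lemma Lp_add x y : Lp (x + y) = Lp x + Lp y.
Proof. by rewrite /Lp /adj2 -big_split; apply: eq_bigr => i _; rewrite /frobinv mulrDr frobD. Qed.
Lemma sqrt_add (x y : F) : sqrtF N (x + y) = sqrtF N x + sqrtF N y.
Proof. by rewrite /sqrtF /frobinv frobD. Qed.
Lemma phi_add x y : phi (x + y) = phi x + phi y.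
Proof. rewrite /phi Lp_add sqrt_add; ring. Qed.
Lemma M_add x y : M (x + y) = M x + M y.
Proof. have := frobD 1 x y; rewrite expn1 /M L_add => ->; ring. Qed.

Lemma adjL x y : T (L x * y) = T (x * Lp y).
Proof.
rewrite /L /Lp /lin2 /adj2 mulr_suml mulr_sumr !T_sum; apply: eq_bigr => j _.
rewrite -(T_frob (N - j)) /frobinv !exprMn -exprM -expnD subnKC ?xN; last exact: ltnW.
congr T; ring.
Qed.

Lemma adjS (x y : F) : T (x ^+ 2 * y) = T (x * sqrtF N y).
Proof.
rewrite /sqrtF /frobinv -[RHS]T_sq exprMn -exprM -expnSr subn1 prednK ?N0 //.
by rewrite xN.
Qed.

Lemma adjM x y : T (M x * y) = T (x * phi y).
Proof. by rewrite /M /phi mulrDl mulrDr !T_add adjL adjS. Qed.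

Definition cc (c : F) := c ^+ q + c ^+ (q ^ n.-1).

Lemma cc0 c : cc c = 0 -> c \in Fq.
Proof.
move/eqP; rewrite addr_eq0 opp2 => /eqP e.
case En: n nodd => [|n'] // on; move: e; rewrite En /= => e.
have e2 : c ^+ (q ^ 2) = c by rewrite expnS expn1 exprM e -exprM -expnSr -En xqn.
have ek k : c ^+ (q ^ (2 * k)) = c.
  elim: k => [|k IH]; first by rewrite expr1.
  by rewrite mulnSr expnD exprM IH e2.
rewrite inE; apply/eqP.
have : c ^+ (q ^ n) = c by rewrite xqn.
rewrite -(odd_double_half n) nodd -muln2 mulnC add1n expnS mulnC exprM ek.
by [].
Qed.

Lemma f_diff x c : f (x + c) = f x + Tr m n (x * cc c) + Tr m n (c ^+ q.+1) + L c.
Proof.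
rewrite /f -/L L_add !exprS frobD.
have h : Tr m n (x ^+ q * c) = Tr m n (x * c ^+ (q ^ n.-1)).
  rewrite -[RHS]Tr_q exprMn -exprM -expnSr.
  by case En: n nodd => [|n'] // _; rewrite /= -En xqn.
rewrite /cc [x * (_ + _)]mulrDr !Tr_add -h.
have -> : (x + c) * (x ^+ q + c ^+ q) = x * x ^+ q + (x ^+ q * c + x * c ^+ q) + c * c ^+ q by ring.
rewrite !Tr_add; ring.
Qed.

Lemma Tr_onto t : t \in Fq -> exists x, Tr m n x = t.
Proof. by apply: im_big; [exact: Tr_add | exact: Tr_Fq' | exact: card_K]. Qed.

Lemma Tr_cq c : c \in Fq -> Tr m n (c ^+ q.+1) = c ^+ 2.
Proof.
move=> cF; have := cF; rewrite inE => /eqP e.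
rewrite exprS e -expr2 Tr_Fq //; exact: Fq_sq.
Qed.

Lemma cc_Fq c : c \in Fq -> cc c = 0.
Proof. move=> cF; have := cF; rewrite inE => /eqP e. by rewrite /cc e Fq_iter // add2. Qed.

Lemma Pi : injective f -> forall c, L c \in Fq -> c \in Fq.
Proof.
move=> fI c Lc; apply: contraT => cnF.
have cc0' : cc c != 0 by apply: contra cnF => /eqP; exact: cc0.
have tF : Tr m n (c ^+ q.+1) + L c \in Fq by rewrite Fq_add ?Tr_Fq'.
case: (Tr_onto _ tF) => x0 hx0.
have : f (x0 / cc c + c) = f (x0 / cc c).
  rewrite f_diff divfK // hx0.
  set u := f _; set v := Tr m n _; set w := L c.
  have -> : u + (v + w) + v + w = u + ((v + w) + (v + w)) by ring.
  by rewrite add2 addr0.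
move/fI/eqP; rewrite addrC -subr_eq0 addrK => /eqP c0.
by move: cnF; rewrite c0 Fq0.
Qed.

Lemma Pii : injective f -> forall c, c \in Fq -> M c = 0 -> c = 0.
Proof.
move=> fI c cF Mc; have : f (0 + c) = f 0.
  by rewrite f_diff mul0r Tr0 addr0 Tr_cq // -addrA [c ^+ 2 + _]addrC -/(M c) Mc addr0.
by rewrite add0r => /fI.
Qed.

Lemma Pf : (forall c, L c \in Fq -> c \in Fq) ->
  (forall c, c \in Fq -> M c = 0 -> c = 0) -> injective f.
Proof.
move=> H1 H2 x y e.
suff c0 : y + x = 0 by move/eqP: c0; rewrite addr_eq0 opp2 => /eqP ->.
have ey : f (x + (y + x)) = f x by rewrite [y + x]addrC addrA add2 add0r e.
have e' : Tr m n (x * cc (y + x)) + (Tr m n ((y + x) ^+ q.+1) + L (y + x)) = 0.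
  apply: (@addrI _ (f x)); rewrite addr0 -{2}ey f_diff; ring.
move/eqP: e'; rewrite addrA addr_eq0 opp2 => /eqP e2.
have cF : y + x \in Fq by apply: H1; rewrite -e2 Fq_add ?Tr_Fq'.
move: e2; rewrite cc_Fq // mulr0 Tr0 add0r Tr_cq // => e3.
have : M (y + x) = 0 by rewrite /M -e3 add2.
by move/H2; apply.
Qed.

Lemma K_add x y : x \in K -> y \in K -> x + y \in K.
Proof. by rewrite !inE Tr_add => /eqP -> /eqP ->; rewrite addr0. Qed.

Lemma sqrt_K b : b \in K -> sqrtF N b \in K.
Proof.
rewrite !inE /sqrtF /frobinv => /eqP Tb.
suff -> : Tr m n (b ^+ (2 ^ (N - 1))) = (Tr m n b) ^+ (2 ^ (N - 1)).
  by rewrite Tb expr0n expn_eq0.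
by rewrite /Tr frob_sum; apply: eq_bigr => i _; rewrite exprAC.
Qed.

Section Fwd.
Hypothesis fB : bijective f.

Lemma fI : injective f. Proof. exact: bij_inj. Qed.
Lemma fS z : exists x, f x = z.
Proof. by case: fB => g _ gK; exists (g z); rewrite gK. Qed.

Lemma LFq c : c \in Fq -> L c \in Fq.
Proof.
pose g x := L x ^+ q + L x.
have gD : forall x y, g (x + y) = g x + g y.
  by move=> x y; rewrite /g L_add frobD; ring.
have gK : forall x, g x \in K by move=> x; rewrite inE Tr_add Tr_q add2.
have kF : kerg g \subset Fq.
  apply/subsetP => x; rewrite inE => /eqP.
  move/eqP; rewrite addr_eq0 opp2 => /eqP e; apply: (Pi fI); by rewrite inE e.
have e : kerg g = Fq.
  by apply/eqP; rewrite eqEcard kF (leq_trans card_Fq (ker_big _ gD gK)).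
move=> cF; have : c \in kerg g by rewrite e.
by rewrite !inE /g addr_eq0 opp2.
Qed.

Lemma Lp_K b : b \in K -> Lp b \in K.
Proof.
move=> bK; apply: D1 => c cF; rewrite -adjL; apply: K_perp => //; exact: LFq.
Qed.

Lemma phi_K b : b \in K -> phi b \in K.
Proof. by move=> bK; rewrite /phi K_add ?Lp_K ?sqrt_K. Qed.

Lemma Lp_inj b : b \in K -> Lp b = 0 -> b = 0.
Proof.
move=> bK Lb; apply: T_nondeg => z; case: (fS z) => x <-.
rewrite /f mulrDl T_add K_perp ?Tr_Fq' // add0r -/L adjL Lb mulr0 T0 //.
Qed.

Lemma R1 : [set Lp x | x in K] = K.
Proof.
apply/eqP; rewrite eqEcard; apply/andP; split.
  by apply/subsetP => _ /imsetP [x xK ->]; exact: Lp_K.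
rewrite card_in_imset // => x y xK yK e.
have : x + y = 0 by apply: Lp_inj; rewrite ?K_add // Lp_add e add2.
by move/eqP; rewrite addr_eq0 opp2 => /eqP.
Qed.

Lemma MFq : [set M d | d in Fq] = Fq.
Proof.
apply/eqP; rewrite eqEcard; apply/andP; split.
  apply/subsetP => _ /imsetP [x xF ->]; rewrite Fq_add ?Fq_sq //; exact: LFq.
rewrite card_in_imset // => x y xF yF e.
have : x + y = 0 by apply: (Pii fI); rewrite ?Fq_add // M_add e add2.
by move/eqP; rewrite addr_eq0 opp2 => /eqP.
Qed.

Lemma R3 z : phi z \in K -> z \in K.
Proof.
move=> pK; apply: D1 => c; rewrite -{1}MFq => /imsetP [d dF ->].
by rewrite adjM K_perp.
Qed.

Lemma R4 y : exists x, phi x - y \in K.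
Proof.
pose g x := Tr m n (phi x).
have gD : forall x y, g (x + y) = g x + g y by move=> x z; rewrite /g phi_add Tr_add.
have kb : (#|kerg g| <= q ^ n.-1)%N.
  apply: leq_trans card_K; apply: subset_leq_card; apply/subsetP => x.
  by rewrite inE => xK; apply: R3; rewrite inE.
case: (im_big _ gD (fun x => Tr_Fq' _) kb _ (Tr_Fq' y)) => x hx.
by exists x; rewrite inE sub2 Tr_add /g in hx *; rewrite hx add2.
Qed.

Lemma fwd : [set Lp x | x in K] = K /\
    (forall x y : F, x - y \in K -> phi x - phi y \in K) /\
    (forall x y : F, phi x - phi y \in K -> x - y \in K) /\
    (forall y : F, exists x : F, phi x - y \in K).
Proof.
split; first exact: R1.
split; first by move=> x y; rewrite !sub2 -phi_add; exact: phi_K.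
split; first by move=> x y; rewrite !sub2 -phi_add; exact: R3.
exact: R4.
Qed.
End Fwd.

Lemma bwd : [set Lp x | x in K] = K /\
    (forall x y : F, x - y \in K -> phi x - phi y \in K) /\
    (forall x y : F, phi x - phi y \in K -> x - y \in K) /\
    (forall y : F, exists x : F, phi x - y \in K) -> bijective f.
Proof.
move=> [R1' [_ [_ R4']]]; apply: injF_bij; apply: Pf.
  move=> c Lc; apply: D2 => k; rewrite -R1' => /imsetP [b bK ->].
  by rewrite mulrC -adjL K_perp.
move=> c cF Mc; apply: T_nondeg => z; case: (R4' z) => x hx.
have -> : z = phi x + (phi x - z) by rewrite sub2 addrA add2 add0r.
by rewrite mulrC mulrDr T_add -adjM Mc mul0r T0 add0r K_perp.
Qed.

End Main.

Theorem mainTheorem7 (F : finFieldType) (m n : nat) (a : nat -> F) :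
  (0 < m)%N -> odd n -> #|F| = (2 ^ (m * n))%N ->
  let K := [set x : F | Tr m n x == 0] in
  let Lp := adj2 (m * n) a in
  let phi := fun x : F => Lp x + sqrtF (m * n) x in
  bijective (fun x : F => Tr m n (x ^+ (2 ^ m).+1) + lin2 (m * n) a x)
  <->
  ( [set Lp x | x in K] = K /\
    (* phi induces a well-defined map  K + alpha |-> K + phi(alpha)  on F/K *)
    (forall x y : F, x - y \in K -> phi x - phi y \in K) /\
    (* ... which is injective on F/K *)
    (forall x y : F, phi x - phi y \in K -> x - y \in K) /\
    (* ... and surjective on F/K *)
    (forall y : F, exists x : F, phi x - y \in K) ).
Proof.
move=> m0 nodd cardF K Lp phi; split.
  by move=> fB; exact: (@fwd F m n a m0 nodd cardF fB).
by move=> H; exact: (@bwd F m n a m0 nodd cardF H).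
Qed.
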